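(* Let $p$ be a prime, let $\lambda$ be a partition, and write $r(\lambda)=(r_1,\ldots,r_{p-1})$. Then $c^{(p)}_\lambda\neq 0$ if and only if both of the following hold: (i) $p\nmid|\lambda|$; (ii) there exists $a\in\{1,\ldots,p-1\}$ with $r_a=\max r(\lambda)$ such that $\max r(\lambda)\leq |{}^b r(\lambda)|_p$, where $b\in\{1,\ldots,p-1\}$ satisfies $ab\equiv 1 \pmod p$.
   Context: A composition of $n\in\mathbb{N}_0$ is a finite sequence $\delta=(\delta_1,\ldots,\delta_s)$ of positive integers with $\sum_i\delta_i=n$; write $\ell(\delta)=s$, $|\delta|=n$; the unique composition of $0$ is the empty composition. A partition is a composition with $\delta_1\geq\cdots\geq\delta_s$. Partial sums: $\delta^+_j=\sum_{i=1}^j\delta_i$. For a positive integer $d$, $n_d(\delta)=|\{i:\delta_i=d\}|$. For a positive integer $q$, a composition $\delta$ is called $q'$-cumulative if it is nonempty and $q\nmid\delta^+_j$ for all $1\leq j\leq\ell(\delta)$ (the empty composition is not regarded as $q'$-cumulative). For a partition $\lambda$, $\mathscr{C}(\lambda)$ is the set of compositions that are rearrangements of $\lambda$, and $c^{(q)}_\lambda$ is the number of $q'$-cumulative $\delta\in\mathscr{C}(\lambda)$. For $0\leq j\leq q-1$, $r_j(\delta)=\sum_{i\equiv j \,(\mathrm{mod}\ q)}n_i(\delta)$, and $r(\delta)=(r_1(\delta),\ldots,r_{q-1}(\delta))\in\mathbb{N}_0^{q-1}$. For $\mathbf{r}=(r_1,\ldots,r_{q-1})\in\mathbb{N}_0^{q-1}$: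 $|\mathbf{r}|_q=(q-1)+\sum_{i=2}^{q-1}(q-i)r_i$, $\max\mathbf{r}=\max\{r_1,\ldots,r_{q-1}\}$, and for $a$ invertible modulo $q$, ${}^a\mathbf{r}=(r'_1,\ldots,r'_{q-1})$ where $r'_j=r_i$ whenever $j\equiv ai \pmod q$ ($1\le i,j\le q-1$). *)

(* Defs.v *)
From mathcomp Require Import all_boot.
Set Implicit Arguments. Unset Strict Implicit. Unset Printing Implicit Defensive.

Definition is_partition (l : seq nat) : bool :=
  all (fun x => 0 < x) l && sorted geq l.

Definition psum (d : seq nat) (j : nat) : nat := sumn (take j d).

Definition cumulative (q : nat) (d : seq nat) : bool :=
  (d != [::]) && all (fun j => ~~ (q %| psum d j)) (iota 1 (size d)).

(* C(lambda): the rearrangements of lambda (permutations is duplicate-free);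
   c^(q)_lambda = number of q'-cumulative ones. *)
Definition cnum (q : nat) (l : seq nat) : nat := count (cumulative q) (permutations l).

Definition nmult (d : nat) (dl : seq nat) : nat := count (pred1 d) dl.

Definition rj (q : nat) (dl : seq nat) (j : nat) : nat :=
  \sum_(1 <= i < (\max_(x <- dl) x).+1 | i == j %[mod q]) nmult i dl.

(* r vectors are functions nat -> nat, meaningful on indices 1..q-1 *)
Definition rvec (q : nat) (dl : seq nat) : nat -> nat := rj q dl.

Definition rnorm (q : nat) (r : nat -> nat) : nat :=
  (q - 1) + \sum_(2 <= i < q) (q - i) * r i.

Definition rmax (q : nat) (r : nat -> nat) : nat := \max_(1 <= i < q) r i.

(* ^a r : r'_j = r_i whenever j = a i (mod q), 1 <= i,j <= q-1 *)
Definition rtwist (q a : nat) (r : nat -> nat) : nat -> nat :=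
  fun j => r (nth 0 [seq i <- iota 1 q.-1 | a * i == j %[mod q]] 0).

(* Main.v *)
Require Import Defs.
From mathcomp Require Import all_boot zify.
Set Implicit Arguments. Unset Strict Implicit. Unset Printing Implicit Defensive.

Definition gv (p b x : nat) := (b * x) %% p.
Definition cnt p b c (l : seq nat) := count (fun x => gv p b x == c) l.
Definition nz p b (l : seq nat) := count (fun x => gv p b x != 0) l.
Definition big p b (l : seq nat) := count (fun x => 1 < gv p b x) l.
Definition Ts p b (l : seq nat) := sumn (map (gv p b) l).
Definition okp p d := all (fun j => ~~ (p %| psum d j)) (iota 1 (size d)).
Definition good p l := exists d, perm_eq d l /\ cumulative p d.

Lemma okp_rcons p d x : okp p (rcons d x) = okp p d && ~~ (p %| sumn (rcons d x)).
Proof.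
rewrite /okp size_rcons -[(size d).+1]addn1 iotaD all_cat /= andbT add1n.
congr andb; last by rewrite /psum take_oversize // size_rcons.
apply: eq_in_all => j; rewrite mem_iota => /andP[_ hj].
rewrite /psum -cats1 take_cat; case: ltnP => h //.
have -> : j = size d by lia.
by rewrite subnn take0 cats0 take_size.
Qed.

Lemma perm_rem_count (P : pred nat) x l : x \in l -> count P l = P x + count P (rem x l).
Proof. by move=> xl; rewrite (permP (perm_to_rem xl)). Qed.

Lemma perm_rem_sum x l : x \in l -> sumn l = x + sumn (rem x l).
Proof. by move=> xl; rewrite (perm_sumn (perm_to_rem xl)). Qed.

Lemma perm_rem_Ts p b x l : x \in l -> Ts p b l = gv p b x + Ts p b (rem x l).
Proof. by move=> xl; rewrite /Ts (perm_sumn (perm_map _ (perm_to_rem xl))). Qed.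

Lemma good_step p x l : x \in l -> ~~ (p %| sumn l) ->
  (rem x l = [::] \/ good p (rem x l)) -> good p l.
Proof.
move=> xl hs h.
have [d [pd okd]] : exists d, perm_eq d (rem x l) /\ okp p d.
  case: h => [->|[d [pd /andP[_ okd]]]]; last by exists d.
  by exists [::].
exists (rcons d x); split.
  rewrite perm_sym (perm_trans (perm_to_rem xl)) //.
  by rewrite perm_sym perm_rcons perm_cons.
rewrite /cumulative -/(okp p (rcons d x)) okp_rcons okd /=.
have -> : sumn (rcons d x) = sumn l.
  by rewrite sumn_rcons (perm_sumn pd) (perm_rem_sum xl) addnC.
by rewrite hs; case: (d).
Qed.

Lemma gv_lt p b x : 0 < p -> gv p b x < p.
Proof. by move=> hp; rewrite /gv ltn_pmod. Qed.

Lemma Ts_cons p b x l : Ts p b (x :: l) = gv p b x + Ts p b l.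
Proof. by []. Qed.

Lemma Ts_mod p b l : Ts p b l %% p = (b * sumn l) %% p.
Proof.
elim: l => [|x l IH]; first by rewrite /Ts /= muln0.
rewrite Ts_cons /= /gv.
by rewrite modnDml -modnDmr IH modnDmr mulnDr.
Qed.

Lemma notdvd_b p b : 0 < b < p -> (p %| b) = false.
Proof. by case/andP=> h1 h2; rewrite gtnNdvd. Qed.

Lemma dvd_Ts p b l : prime p -> 0 < b < p -> (p %| sumn l) = (p %| Ts p b l).
Proof.
move=> pr hb; rewrite /dvdn Ts_mod -/(dvdn p (b * sumn l)).
by rewrite Euclid_dvdM // notdvd_b.
Qed.

Lemma gv_eq0 p b x : prime p -> 0 < b < p -> (gv p b x == 0) = (p %| x).
Proof.
move=> pr hb; rewrite /gv -/(dvdn p (b * x)).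
by rewrite Euclid_dvdM // notdvd_b.
Qed.

Lemma nz_dvd p b l : prime p -> 0 < b < p -> nz p b l = count (fun x => ~~ (p %| x)) l.
Proof. by move=> pr hb; apply: eq_count => x; rewrite gv_eq0. Qed.

Lemma nz_split p b l : nz p b l = cnt p b 1 l + big p b l.
Proof.
rewrite /nz /cnt /big; elim: l => [|x l IH] //=; rewrite IH.
case: (gv p b x) => [|[|n]] /=; lia.
Qed.

Lemma cnt_le_big p b c l : 1 < c -> cnt p b c l <= big p b l.
Proof. move=> hc; apply: sub_count => x /= /eqP ->; exact: hc. Qed.

Lemma cnt_disj p b c l : c != 1 -> 0 < c -> cnt p b c l + cnt p b 1 l <= nz p b l.
Proof.
rewrite /nz /cnt => h1 h0; elim: l => [|x l IH] //=.
have : (gv p b x == c) + (gv p b x == 1) <= (gv p b x != 0).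
  case: eqP => [->|]; first by rewrite (negbTE h1) -lt0n h0.
  by case: eqP => [->|] //=; case: (gv p b x).
lia.
Qed.

Lemma Ts_ge_nz p b l : nz p b l <= Ts p b l.
Proof.
rewrite /nz; elim: l => [|x l IH] //; rewrite Ts_cons /=.
by case: (gv p b x) => [|n] /=; lia.
Qed.

Lemma Ts_le1 p b l : 0 < p -> Ts p b l + (p - 1) * cnt p b 1 l <= cnt p b 1 l + (p - 1) * nz p b l.
Proof.
rewrite /nz /cnt => hp; elim: l => [|x l IH] //; rewrite Ts_cons /=.
have := gv_lt b x hp.
case: (gv p b x) => [|[|n]] /= h; nia.
Qed.

Lemma Ts_le_t p b t l : (forall x, x \in l -> 1 < gv p b x -> gv p b x <= t) ->
  Ts p b l <= cnt p b 1 l + t * big p b l.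
Proof.
rewrite /big /cnt; elim: l => [|x l IH] // h; rewrite Ts_cons /=.
have h1 : Ts p b l <= count (fun x => gv p b x == 1) l + t * count (fun x => 1 < gv p b x) l.
  by apply: IH => y yl; apply: h; rewrite inE yl orbT.
have h2 := h x (mem_head _ _).
move: h2; case: (gv p b x) => [|[|n]] /= h2; try nia.
Qed.

Lemma dvd_sub p T j : ~~ (p %| T) -> j < p -> j <= T -> (p %| T - j) = (j == T %% p).
Proof.
move=> hT hj hjT; rewrite -eqn_mod_dvd // (modn_small hj).
by rewrite eq_sym.
Qed.

Lemma inv_ex p t : prime p -> 0 < t < p -> exists u, 0 < u < p /\ (t * u) %% p = 1.
Proof.
move=> pr /andP[t0 tp].
have p1 := prime_gt1 pr.
case: (egcdnP p t0) => km kn E _.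
have g : gcdn t p = 1.
  apply/eqP; rewrite -/(coprime t p) coprime_sym prime_coprime //.
  by rewrite gtnNdvd.
rewrite g in E.
have m1 : (t * km) %% p = 1.
  by rewrite mulnC E -modnDml modnMl add0n modn_small.
exists (km %% p); split; last by rewrite modnMmr.
rewrite ltn_pmod ?andbT; last by lia.
rewrite lt0n; apply/negP => /eqP h.
by move: m1; rewrite -modnMmr h muln0 mod0n.
Qed.

Lemma inv_eq1 p t u y : 0 < p -> t < p -> y < p -> (t * u) %% p = 1 ->
  ((u * y) %% p == 1) = (y == t).
Proof.
move=> hp ht hy htu; apply/eqP/eqP => [h|->]; last by rewrite mulnC.
have : (t * ((u * y) %% p)) %% p = t %% p by rewrite h muln1.
rewrite modnMmr mulnA -modnMml htu mul1n !modn_small //.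
Qed.

Lemma gv_twist p b u x : gv p ((b * u) %% p) x = (u * gv p b x) %% p.
Proof. by rewrite /gv modnMml modnMmr mulnCA mulnA. Qed.

Lemma cnt_rem p b c x l : x \in l -> cnt p b c l = (gv p b x == c) + cnt p b c (rem x l).
Proof. exact: perm_rem_count. Qed.
Lemma nz_rem p b x l : x \in l -> nz p b l = (gv p b x != 0) + nz p b (rem x l).
Proof. exact: perm_rem_count. Qed.
Lemma big_rem p b x l : x \in l -> big p b l = (1 < gv p b x) + big p b (rem x l).
Proof. exact: perm_rem_count. Qed.

Lemma Ts_ge p b x l : x \in l -> gv p b x <= Ts p b l.
Proof. by move=> xl; rewrite (perm_rem_Ts _ _ xl) leq_addr. Qed.

Lemma sum_rem_dvd p b x l : prime p -> 0 < b < p -> x \in l -> ~~ (p %| sumn l) ->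
  (p %| sumn (rem x l)) = (gv p b x == Ts p b l %% p).
Proof.
move=> pr hb xl hs.
have hT : ~~ (p %| Ts p b l) by rewrite -(dvd_Ts _ pr hb).
rewrite (dvd_Ts _ pr hb) -(dvd_sub hT (gv_lt _ _ (prime_gt0 pr)) (Ts_ge _ _ xl)).
by rewrite (perm_rem_Ts _ _ xl) addKn.
Qed.

Definition maxprop p b l := forall c, 0 < c < p -> cnt p b c l <= cnt p b 1 l.
Definition Cond p b l := p * cnt p b 1 l + Ts p b l <= p - 1 + p * nz p b l.

Lemma core p : prime p -> forall n l b, size l <= n -> 0 < b < p -> ~~ (p %| sumn l) ->
  maxprop p b l -> Cond p b l -> good p l.
Proof.
move=> pr; have p1 := prime_gt1 pr; have p0 := prime_gt0 pr.
elim=> [|n IHn] l b.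
  by case: l => // _ _; rewrite dvdn0.
move=> hsz hb hs hmax hC.
have step : forall x b', x \in l -> 0 < b' < p -> ~~ (p %| sumn (rem x l)) ->
    maxprop p b' (rem x l) -> Cond p b' (rem x l) -> good p l.
  move=> x b' xl hb' hs' hm' hc'; apply: (good_step xl hs); right.
  apply: (IHn _ b') => //; by rewrite size_rem // -subn1 leq_subLR add1n.
have [sz1|sz2] := leqP (size l) 1.
  case: l hs sz1 {hsz hmax hC step} => [|x [|y l]] //=; first by rewrite dvdn0.
  move=> hs _; apply: (good_step (x:=x)); rewrite ?mem_head //=.
  by left; rewrite eqxx.
move Tdef: (Ts p b l) => T; move tdef: (T %% p) => t.
have hT : ~~ (p %| T) by rewrite -Tdef -(dvd_Ts _ pr hb).
have t0 : 0 < t by rewrite -tdef lt0n; apply: contra hT; rewrite /dvdn.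
have tp : t < p by rewrite -tdef ltn_pmod.
move Mdef: (cnt p b 1 l) => M; move Ndef: (nz p b l) => N; move Bdef: (big p b l) => Bc.
have hN : N = M + Bc by rewrite -Ndef -Mdef -Bdef nz_split.
move: hC; rewrite /Cond Mdef Tdef Ndef => hC.
have [/hasP [x xl /eqP gx0]|h1] := boolP (has (fun x => gv p b x == 0) l).
  apply: (step x b) => //.
  - by rewrite (sum_rem_dvd pr hb xl hs) gx0 Tdef tdef eq_sym -lt0n t0.
  - move=> c hc; have := hmax c hc.
    by rewrite (cnt_rem _ _ c xl) (cnt_rem _ _ 1 xl) gx0; case: c hc.
  - move: hC; rewrite /Cond -Mdef -Ndef -Tdef (cnt_rem _ _ 1 xl) (nz_rem _ _ xl) (perm_rem_Ts _ _ xl) gx0.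
    by rewrite /= !add0n.
have hall0 : forall x, x \in l -> gv p b x != 0.
  by move=> x xl; apply: contraNneq h1 => e; apply/hasP; exists x; rewrite ?e.
have [/hasP [x xl /andP[/andP[g1 gt] gi]]|h2] :=
  boolP (has (fun x => (1 < gv p b x) && (gv p b x != t) &&
                        (p * M + T + p <= p - 1 + p * N + gv p b x)) l).
  apply: (step x b) => //.
  - by rewrite (sum_rem_dvd pr hb xl hs) Tdef tdef (negbTE gt).
  - move=> c hc; have := hmax c hc.
    rewrite (cnt_rem _ _ c xl) (cnt_rem _ _ 1 xl).
    have -> : (gv p b x == 1) = false by apply/eqP; lia.
    by case: (gv p b x == c); lia.
  - move: gi; rewrite /Cond -Mdef -Ndef -Tdef (cnt_rem _ _ 1 xl) (nz_rem _ _ xl) (perm_rem_Ts _ _ xl).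
    have -> : (gv p b x == 1) = false by apply/eqP; lia.
    have -> : (gv p b x != 0) = true by apply/eqP; lia.
    simpl; lia.
have hall2 : forall x, x \in l -> 1 < gv p b x ->
    gv p b x = t \/ p - 1 + p * N + gv p b x < p * M + T + p.
  move=> x xl g1; case: (gv p b x =P t) => [|ne]; [by left|right].
  rewrite ltnNge; apply: contra h2 => hi; apply/hasP; exists x => //.
  by rewrite g1 hi andbT /=; apply/eqP.
have hNs : N = size l.
  by rewrite -Ndef -(count_predT l); apply: eq_in_count => x xl; rewrite /= hall0.
have hTN : N <= T by rewrite -Ndef -Tdef Ts_ge_nz.
have rem1 : t != 1 -> Bc < M -> good p l.
  move=> t1 BM; have : 0 < M by lia.
  rewrite -Mdef /cnt -has_count => /hasP [x1 x1l /eqP g1].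
  apply: (step x1 b) => //.
  - by rewrite (sum_rem_dvd pr hb x1l hs) g1 Tdef tdef eq_sym (negbTE t1).
  - move=> c hc; have e1 := cnt_rem p b 1 x1l; rewrite g1 eqxx Mdef in e1.
    have [->|c1] := eqVneq c 1; first by [].
    have e2 := cnt_rem p b c x1l.
    have e3 := @cnt_le_big p b c l ltac:(case: c hc c1 {e2} => [|[|c]] //).
    rewrite Bdef in e3; lia.
  - rewrite /Cond.
    have e1 := cnt_rem p b 1 x1l; have e2 := nz_rem p b x1l; have e3 := perm_rem_Ts p b x1l.
    rewrite g1 Mdef Ndef Tdef /= in e1 e2 e3; lia.
have hCN := hC; rewrite hN in hCN.
have [hD|hD] := leqP (p * M + T + p) (p - 1 + p * N).
  have hallt : forall x, x \in l -> 1 < gv p b x -> gv p b x = t.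
    by move=> x xl g; case: (hall2 x xl g) => //; lia.
  have hB0 : 0 < Bc.
    have : 0 < p * Bc by rewrite hN in hD; lia.
    by rewrite muln_gt0 => /andP[].
  have [x0 x0l g0] : exists2 x0, x0 \in l & 1 < gv p b x0.
    by apply/hasP; rewrite has_count -/(big p b l) Bdef.
  have t1 : 1 < t by rewrite -(hallt x0 x0l g0).
  have hct : cnt p b t l = Bc.
    rewrite -Bdef /cnt /big; apply: eq_in_count => x xl /=.
    case: (ltnP 1 (gv p b x)) => h; first by rewrite (hallt x xl h) eqxx.
    by apply/eqP => e; lia.
  have BM : Bc <= M by rewrite -hct -Mdef; apply: hmax; lia.
  have [BM'|BM'] := ltnP Bc M.
    by apply: rem1 => //; apply/eqP => e; lia.
  have eMB : M = Bc by lia.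
  have [u [hu hut]] := inv_ex pr (ltac:(lia) : 0 < t < p).
  have hb' : 0 < (b * u) %% p < p.
    rewrite ltn_pmod // andbT lt0n; apply/negP => /eqP h.
    have : p %| b * u by rewrite /dvdn h.
    by rewrite Euclid_dvdM // !notdvd_b.
  have : 0 < M by lia.
  rewrite -Mdef /cnt -has_count => /hasP [x1 x1l /eqP g1].
  have ec : cnt p ((b * u) %% p) 1 (rem x1 l) = Bc.
    have -> : cnt p ((b * u) %% p) 1 (rem x1 l) = cnt p b t (rem x1 l).
      by apply: eq_count => y; rewrite /= gv_twist (inv_eq1 p0 tp (gv_lt b y p0) hut).
    have e := cnt_rem p b t x1l; rewrite g1 hct in e.
    by move: e; case: eqP => //; lia.
  have en : nz p ((b * u) %% p) (rem x1 l) = (M + Bc).-1.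
    rewrite (nz_dvd _ pr hb') -(nz_dvd _ pr hb).
    have e := nz_rem p b x1l; rewrite g1 Ndef hN /= in e; lia.
  apply: (step x1 ((b * u) %% p)) => //.
  - by rewrite (sum_rem_dvd pr hb x1l hs) g1 Tdef tdef; apply/eqP; lia.
  - move=> c hc; rewrite ec.
    have [->|c1] := eqVneq c 1; first by rewrite ec.
    have := cnt_disj p ((b * u) %% p) (rem x1 l) c1 (ltac:(lia) : 0 < c).
    rewrite ec en; lia.
  - rewrite /Cond ec en.
    have := Ts_le1 ((b * u) %% p) (rem x1 l) p0.
    rewrite ec en eMB.
    move: (Ts p _ _) => X.
    have [k ->] : exists k, Bc = k.+1 by exists Bc.-1; lia.
    have [q ->] : exists q, p = q.+2 by exists p.-2; lia.
    rewrite !subSS !subn0 addSn /=; lia.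
rewrite hN in hD.
have hTQ := divn_eq T p; rewrite tdef in hTQ.
move: (T %/ p) hTQ => Q hTQ.
have hQ : Q = Bc.
  have m1 : Q < Bc -> Q.+1 * p <= Bc * p by move=> h; apply: leq_mul.
  have m2 : Bc < Q -> Bc.+1 * p <= Q * p by move=> h; apply: leq_mul.
  case: (ltngtP Q Bc) => // h; [have := m1 h | have := m2 h]; lia.
subst Q.
have hallle : forall x, x \in l -> 1 < gv p b x -> gv p b x <= t.
  move=> x xl g; case: (hall2 x xl g) => [->//|]; rewrite hN; lia.
have hTle := Ts_le_t hallle; rewrite Mdef Bdef Tdef in hTle.
have hm := leq_mul (tp : t.+1 <= p) (leqnn Bc).
have t1 : t != 1.
  apply/eqP => e; subst t.
  have B0 : Bc = 0.
    rewrite -Bdef /big; apply/eqP; rewrite -leqn0 leqNgt -has_count.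
    by apply/hasP => [[x xl g]]; have := hallle x xl g; lia.
  rewrite B0 in hTQ; lia.
by apply: rem1 => //; lia.
Qed.

Lemma nec p b d : prime p -> 0 < b < p -> okp p d ->
  p * cnt p b 1 d + Ts p b d <= (b * sumn d) %% p + p * nz p b d.
Proof.
move=> pr hb; have p0 := prime_gt0 pr.
elim/last_ind: d => [|d x IH]; first by rewrite /Ts /= muln0.
rewrite okp_rcons => /andP[ok hs]; have := IH ok.
rewrite /cnt /nz /Ts -!cats1 !count_cat map_cat !sumn_cat -/(Ts p b d) /= !addn0.
rewrite -cats1 sumn_cat /= addn0 in hs.
have hs' : (b * (sumn d + x)) %% p != 0.
  apply/negP => /eqP h; have : p %| b * (sumn d + x) by rewrite /dvdn h.
  by rewrite Euclid_dvdM // notdvd_b //= (negbTE hs).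
have e : (b * (sumn d + x)) %% p = ((b * sumn d) %% p + gv p b x) %% p.
  by rewrite /gv modnDm mulnDr.
rewrite e in hs' *.
have := gv_lt b x p0; have := ltn_pmod (b * sumn d) p0.
move: ((b * sumn d) %% p) (gv p b x) hs' => s y hs' hsp hyp.
have [h|h] := ltnP (s + y) p.
  rewrite (modn_small h) in hs' *.
  case: y hs' hyp h => [|[|y]] /= *; lia.
have e2 : s + y = (s + y - p) + p by lia.
rewrite e2 modnDr modn_small in hs' *; try lia.
Qed.

Lemma sum_ind m n y F : \sum_(m <= i < n) (y == i) * F i = if m <= y < n then F y else 0.
Proof.
elim: n => [|n IH]; first by rewrite big_geq // andbF.
have [mn|nm] := leqP m n.
  rewrite big_nat_recr // IH /=; case: eqP => [->|ne].
    by rewrite ltnn andbF mul1n add0n mn ltnSn.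
  rewrite mul0n addn0 ltnS [y <= n]leq_eqVlt; congr (if _ then _ else _).
  by case: eqP => // e; case: ne.
rewrite big_geq //; case: ifP => // /andP[h1 h2]; lia.
Qed.

Lemma rj_count q l j m : (forall x, x \in l -> 0 < x <= m) ->
  \sum_(1 <= i < m.+1 | i == j %[mod q]) nmult i l = count (fun x => x == j %[mod q]) l.
Proof.
elim: l => [|x l IH] h.
  by rewrite big1.
rewrite /nmult /= big_split /= IH; last by move=> y yl; apply: h; rewrite inE yl orbT.
congr (_ + _).
have -> : \sum_(1 <= i < m.+1 | i == j %[mod q]) (x == i : nat) =
    \sum_(1 <= i < m.+1) (x == i) * (i == j %[mod q]).
  rewrite big_mkcond; apply: eq_bigr => i _.
  by case: (i == j %[mod q]); rewrite ?muln1 ?muln0.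
rewrite sum_ind; have := h x (mem_head _ _).
by rewrite ltnS => ->.
Qed.

Lemma rvec_count p l j : is_partition l ->
  rvec p l j = count (fun x => x == j %[mod p]) l.
Proof.
case/andP=> /allP hpos _; rewrite /rvec /rj; apply: rj_count => x xl.
rewrite hpos //=; exact: (leq_bigmax_seq (F := fun x => x)).
Qed.

Lemma mod_cancel p a b i j : (a * b) %% p = 1 -> (b * i) %% p = j %% p -> i %% p = (a * j) %% p.
Proof.
move=> hab hij.
by rewrite -[in LHS](mul1n i) -hab modnMml -mulnA -modnMmr hij modnMmr.
Qed.

Lemma mod_nz p a j : prime p -> 0 < a < p -> 0 < j < p -> 0 < (a * j) %% p < p.
Proof.
move=> pr ha hj; apply/andP; split; last by rewrite ltn_pmod // prime_gt0.
rewrite lt0n.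
apply/negP => /eqP h; have : p %| a * j by rewrite /dvdn h.
by rewrite Euclid_dvdM // !notdvd_b.
Qed.

Lemma gv_equiv p a b x c : 1 < p -> (a * b) %% p = 1 -> c < p ->
  (gv p b x == c) = (x == (a * c) %% p %[mod p]).
Proof.
move=> p1 hab hc; rewrite /gv modn_mod; apply/eqP/eqP => h.
  by apply: mod_cancel hab _; rewrite h modn_small.
rewrite -modnMmr h modnMmr mulnA -modnMml (mulnC b a) hab mul1n modn_small //.
Qed.

Lemma cnt_rvec p a b c l : 1 < p -> (a * b) %% p = 1 -> c < p -> is_partition l ->
  cnt p b c l = rvec p l ((a * c) %% p).
Proof.
move=> p1 hab hc hl; rewrite rvec_count //; apply: eq_count => x.
exact: gv_equiv.
Qed.

Lemma rtwist_eq p a b r j : prime p -> 0 < a < p -> 0 < b < p -> (a * b) %% p = 1 -> 0 < j < p ->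
  rtwist p b r j = r ((a * j) %% p).
Proof.
move=> pr ha hb hab hj; have p1 := prime_gt1 pr; rewrite /rtwist.
rewrite (@eq_in_filter _ _ (pred1 ((a * j) %% p))); last first.
  move=> i; rewrite mem_iota => /andP[i1 i2] /=.
  have ip : i < p by lia.
  case/andP: hj => _ jp.
  have e := @gv_equiv p a b i j p1 hab jp; rewrite /gv modn_mod (modn_small ip) in e.
  by rewrite (modn_small jp) e.
rewrite filter_pred1_uniq ?iota_uniq // mem_iota.
have := mod_nz pr ha hj; lia.
Qed.

Lemma wsum_id p b l : 0 < p ->
  \sum_(1 <= i < p) (p - i) * cnt p b i l + Ts p b l = p * nz p b l.
Proof.
move=> p0; elim: l => [|x l IH].
  by rewrite /Ts /nz /= muln0 big1 // => i _; rewrite /cnt /= muln0.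
rewrite Ts_cons /nz /cnt /=.
under eq_bigr => i _ do rewrite mulnDr.
rewrite big_split /=.
have -> : \sum_(1 <= i < p) (p - i) * (gv p b x == i) = \sum_(1 <= i < p) (gv p b x == i) * (p - i).
  by apply: eq_bigr => i _; rewrite mulnC.
rewrite sum_ind.
move: IH; rewrite /cnt /nz => IH.
have := gv_lt b x p0.
case: (gv p b x) => [|y] /= hy; first by rewrite !add0n IH.
rewrite hy mulnDr muln1 -IH; lia.
Qed.

Lemma leq_max_nat m n F c : m <= c < n -> F c <= \max_(m <= i < n) F i.
Proof. by move=> h; apply: leq_bigmax_seq; rewrite // mem_index_iota. Qed.

Lemma max_arg m n F : m < n -> exists2 i, m <= i < n & \max_(m <= i < n) F i = F i.
Proof.
elim: n => // n IH h.
have [mn|mn] := ltnP m n.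
  have [i hi e] := IH mn; rewrite big_nat_recr /=; last by lia.
  rewrite e; have [le|lt] := leqP (F n) (F i).
    by exists i => //; lia.
  by exists n => //; lia.
have -> : m = n by lia.
by exists n; [lia | rewrite big_nat1].
Qed.

Lemma conv p a b l : prime p -> 0 < a < p -> 0 < b < p -> (a * b) %% p = 1 -> is_partition l ->
  (cnt p b 1 l <= rnorm p (rtwist p b (rvec p l))) <-> Cond p b l.
Proof.
move=> pr ha hb hab hl; have p1 := prime_gt1 pr; have p0 := prime_gt0 pr.
have e1 : rnorm p (rtwist p b (rvec p l)) = p - 1 + \sum_(2 <= i < p) (p - i) * cnt p b i l.
  rewrite /rnorm; congr (_ + _); apply: eq_big_nat => i hi.
  rewrite (rtwist_eq _ pr ha hb hab) ?(cnt_rvec p1 hab) //; lia.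
have e2 := wsum_id b l p0; rewrite big_ltn // in e2.
rewrite e1 /Cond; move: e2.
move: (\sum_(2 <= i < p) _) (Ts p b l) (nz p b l) (cnt p b 1 l) => S T N C.
have [q ->] : exists q, p = q.+1 by exists p.-1; lia.
rewrite subSS subn0 => e2; split => h; lia.
Qed.

Unset Implicit Arguments.
Theorem theorem1 (p : nat) (l : seq nat) :
  prime p -> is_partition l ->
  (cnum p l != 0) <->
  (~~ (p %| sumn l) /\
   exists a b : nat,
     [/\ 0 < a < p, 0 < b < p, a * b == 1 %[mod p],
         rvec p l a = rmax p (rvec p l) &
         rmax p (rvec p l) <= rnorm p (rtwist p b (rvec p l))]).
Proof.
move=> pr hl; have p1 := prime_gt1 pr; have p0 := prime_gt0 pr.
have -> : (cnum p l != 0) <-> good p l.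
  rewrite /cnum -lt0n -has_count; split => [/hasP [d dp hc]|[d [pd hc]]].
    by exists d; split => //; rewrite -mem_permutations.
  by apply/hasP; exists d => //; rewrite mem_permutations.
split.
  move=> [d [pd /andP [dn ok]]].
  have hs : ~~ (p %| sumn l).
    rewrite -(perm_sumn pd); move: dn ok; case/lastP: d {pd} => // d x _.
    by rewrite -/(okp p _) okp_rcons => /andP[].
  split => //.
  have [a ha ea] := max_arg (rvec p l) p1.
  have ha' : 0 < a < p by lia.
  have [u [hu hau]] := inv_ex pr ha'.
  exists a, u; split => //.
    by rewrite hau modn_small.
  rewrite /rmax ea -/(rmax p (rvec p l)).
  have ec : cnt p u 1 l = rvec p l a by rewrite (cnt_rvec p1 hau) // muln1 modn_small //; lia.
  rewrite -ec (conv pr ha' hu hau hl).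
  have := nec pr hu ok.
  have e1 : cnt p u 1 d = cnt p u 1 l by apply: (permP pd).
  have e2 : nz p u d = nz p u l by apply: (permP pd).
  have e3 : Ts p u d = Ts p u l by rewrite /Ts (perm_sumn (perm_map _ pd)).
  rewrite e1 e2 e3 (perm_sumn pd) /Cond.
  have := ltn_pmod (u * sumn l) p0; lia.
move=> [hs [a [b [ha hb hab he hle]]]].
have hab' : (a * b) %% p = 1 by move/eqP: hab; rewrite (modn_small p1).
have ec : cnt p b 1 l = rvec p l a by rewrite (cnt_rvec p1 hab') // muln1 modn_small //; lia.
apply: (@core p pr (size l) l b) => //.
  move=> c hc; rewrite ec he (cnt_rvec p1 hab') //; last by lia.
  apply: leq_max_nat; have := mod_nz pr ha hc; lia.
by rewrite -(conv pr ha hb hab' hl) ec he.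
Qed.
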